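(* Work in the upper half-space model $\{(x,y,z): z>0\}$ of $\mathbb{H}^3$, where the height of a point $(x,y,z)$ is $\log z$. Let $\gamma$ be a non-vertical geodesic whose highest point has height $0$, and let $v_0 \in N^1(\gamma)$ be the unit normal vector to $\gamma$ based at its highest point and pointing straight up. Let $v \in N^1(\gamma)$, let $h$ be the height of the highest point of the geodesic ray starting at $v$, and write $v - v_0 = x + i\theta \in \mathbb{C}/2\pi i\mathbb{Z}$ with $|\theta| \le \pi$. Then $|x| < 2e^{-h}$ always, and $|\theta| \le 2e^{-h}$ whenever $h > 0$.
   Context: $N^1(\gamma)$ is the unit normal bundle of $\gamma$; it is a torsor for $\mathbb{C}/2\pi i\mathbb{Z}$, where the real part translates the base point along $\gamma$ (signed distance) and the imaginary part rotates the normal vector about $\gamma$. For $v, v_0 \in N^1(\gamma)$, $v - v_0$ denotes the unique element of $\mathbb{C}/2\pi i\mathbb{Z}$ carrying $v_0$ to $v$. *)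

(* Defs.v *)
From Stdlib Require Import Reals Lra.
Open Scope R_scope.

(** A tangent vector at a point p is
    recorded by its Euclidean direction (a Euclidean unit vector); the
    hyperbolic unit vector is z_p times it (the metric is conformal). *)
Definition point := (R * R * R)%type.
Definition px (p : point) : R := fst (fst p).
Definition py (p : point) : R := snd (fst p).
Definition pz (p : point) : R := snd p.
Definition height (p : point) : R := ln (pz p).

Record tvec := TVec { bp : point ; dir : R * R * R }.

(** A non-vertical geodesic gamma whose highest point has height 0 is a
    Euclidean semicircle of radius 1, centred at (c1, c2, 0), lying in the
    vertical plane with horizontal unit direction e = (cos phi, sin phi).
    Its arclength (signed distance) parametrisation with the highest point
    at s = 0 is s |-> (c + tanh s * e, 1 / cosh s). *)
Definition gamma_pt (c1 c2 phi s : R) : point :=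
  (c1 + tanh s * cos phi, c2 + tanh s * sin phi, / cosh s).

Definition v0 (c1 c2 phi : R) : tvec := TVec (gamma_pt c1 c2 phi 0) (0, 0, 1).

(** Along gamma the fields
      N1(s) = (tanh s * e, 1 / cosh s)   (in-plane normal, N1(0) = straight up)
      N2    = (e_perp, 0),  e_perp = (-sin phi, cos phi)
    form a parallel orthonormal (Euclidean-direction) frame of the normal
    bundle (N2 is the normal of the totally geodesic vertical plane
    containing gamma).  Hence v0 + (x + i theta) is the unit normal based at
    gamma(x) with direction cos theta * N1(x) + sin theta * N2.
    (The orientation of theta is a convention; it is irrelevant below.) *)
Definition nb_shift (c1 c2 phi x theta : R) : tvec :=
  TVec (gamma_pt c1 c2 phi x)
    (cos theta * (tanh x * cos phi) + sin theta * (- sin phi),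
     cos theta * (tanh x * sin phi) + sin theta * cos phi,
     cos theta * / cosh x).

(** Geodesics of the upper half-space model are vertical half-lines and
    semicircles orthogonal to the boundary plane.
    - If the direction is vertical, the ray is the vertical half-line going
      up (u3 > 0) or down (u3 < 0).
    - Otherwise, with ehat = horizontal direction normalised, the ray lies on
      the semicircle in the vertical plane through p spanned by ehat, centred
      at c0 on the boundary, of radius Rr; writing points as
      (c0 + w * ehat, sqrt (Rr^2 - w^2)), p corresponds to w = wp and the
      ray is the arc wp <= w < Rr (moving in direction ehat). Here
      wp = - z u3 / |u_h| (so that c0 -> p is orthogonal to u),
      Rr = sqrt (wp^2 + z^2). *)
Definition geod_ray (v : tvec) (q : point) : Prop :=
  let a := px (bp v) in let b := py (bp v) in let z := pz (bp v) in
  let u1 := fst (fst (dir v)) in let u2 := snd (fst (dir v)) in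
  let u3 := snd (dir v) in
  let nh := sqrt (u1 ^ 2 + u2 ^ 2) in
  if Req_EM_T nh 0 then
    px q = a /\ py q = b /\
    ((0 < u3 /\ z <= pz q) \/ (u3 < 0 /\ 0 < pz q /\ pz q <= z))
  else
    let e1 := u1 / nh in let e2 := u2 / nh in
    let wp := - (z * u3) / nh in
    let c01 := a - wp * e1 in let c02 := b - wp * e2 in
    let Rr := sqrt (wp ^ 2 + z ^ 2) in
    exists w, wp <= w < Rr /\
      q = (c01 + w * e1, c02 + w * e2, sqrt (Rr ^ 2 - w ^ 2)).

Definition highest_point (S : point -> Prop) (q : point) : Prop :=
  S q /\ forall q', S q' -> pz q' <= pz q.

(* Main.v *)
Require Import Defs.
From Stdlib Require Import Reals Lra Psatz.
Open Scope R_scope.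

Lemma sinlb_half a : 0 <= a <= 1 -> sin a >= 5/6 * a.
Proof.
  intros H. assert (HP : 1 <= PI) by (pose proof PI2_1; lra).
  destruct (SIN a) as [H1 _]; try lra.
  assert (E: sin_lb a = a - a^3/6 + a^5/120 - a^7/5040)
    by (unfold sin_lb, sin_approx, sin_term; simpl; field).
  rewrite E in H1.
  assert (a^2 <= 1) by nra. assert (0 <= a^5) by (apply pow_le; lra).
  assert (a^7 <= a^5) by (replace (a^7) with (a^5*a^2) by ring; nra).
  nra.
Qed.

Lemma theta_bound t : -PI <= t <= PI -> 0 <= cos t -> Rabs t <= 2 * Rabs (sin t).
Proof.
  intros Ht Hc.
  assert (Hgen : forall u, 0 <= u <= PI -> 0 <= cos u -> u <= 2 * sin u).
  { intros u Hu Hcu.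
    assert (u <= PI/2).
    { destruct (Rle_dec u (PI/2)) as [|n]; auto.
      pose proof (cos_lt_0 u ltac:(lra) ltac:(pose proof PI_RGT_0; lra)); lra. }
    assert (Hu2 : u/2 <= 1) by (pose proof PI_4; lra).
    pose proof (sinlb_half (u/2) ltac:(lra)) as Hs.
    replace u with (2 * (u/2)) at 2 by field.
    rewrite sin_2a.
    pose proof (cos_2a_cos (u/2)) as Hc2.
    replace (2 * (u/2)) with u in Hc2 by field.
    assert (0 <= cos (u/2)) by (apply cos_ge_0; pose proof PI_RGT_0; lra).
    assert (cos (u/2) >= 3/5) by nra.
    nra. }
  destruct (Rle_dec 0 t).
  - pose proof (Hgen t ltac:(lra) Hc). rewrite Rabs_right by lra.
    pose proof (Rle_abs (sin t)). lra.
  - pose proof (Hgen (-t) ltac:(lra) ltac:(rewrite cos_neg; lra)).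
    rewrite sin_neg in H. rewrite Rabs_left by lra.
    pose proof (Rle_abs (- sin t)). rewrite Rabs_Ropp in H0. lra.
Qed.

Lemma cosh_sq x : cosh x ^ 2 = 1 + sinh x ^ 2.
Proof.
  unfold cosh, sinh. rewrite exp_Ropp. pose proof (exp_pos x). field. lra.
Qed.

Lemma cosh_ge1 x : 1 <= cosh x.
Proof.
  pose proof (cosh_sq x). unfold cosh in *. pose proof (exp_pos x). pose proof (exp_pos (-x)).
  assert (0 < cosh x) by (unfold cosh; lra). unfold cosh in *. nra.
Qed.

Lemma sinh_big x : x <> 0 -> Rabs x < 2 * Rabs (sinh x).
Proof.
  intros Hx. unfold sinh.
  pose proof (exp_ineq1 x Hx). assert (- x <> 0) by lra.
  pose proof (exp_ineq1 (-x) H0).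
  rewrite exp_Ropp in *. pose proof (exp_pos x).
  destruct (Rle_dec 0 x).
  - assert (/ exp x < 1). { apply (Rmult_lt_reg_r (exp x)); auto. rewrite Rinv_l; lra. }
    rewrite (Rabs_right x) by lra. rewrite Rabs_right; lra.
  - assert (exp x < 1). { assert (exp x * /exp x = 1) by (field; lra). nra. }
    rewrite (Rabs_left x) by lra. rewrite Rabs_left; lra.
Qed.

Lemma finish (q : point) x th : 0 < pz q -> Rabs x * pz q < 2 ->
  (1 < pz q -> Rabs th * pz q <= 2) ->
  Rabs x < 2 * exp (- height q) /\
  (0 < height q -> Rabs th <= 2 * exp (- height q)).
Proof.
  intros Hp H1 H2. unfold height. rewrite exp_Ropp, exp_ln by auto.
  split.
  - apply (Rmult_lt_reg_r (pz q)); auto. field_simplify; lra.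
  - intros Hl. assert (1 < pz q).
    { apply ln_lt_inv; try lra. rewrite ln_1. exact Hl. }
    apply (Rmult_le_reg_r (pz q)); auto. field_simplify; try lra.
Qed.

Lemma abs_le_sq a K : 0 < K -> a^2 <= K^2 -> Rabs a <= K.
Proof.
  intros HK H. destruct (Rle_dec 0 a).
  - rewrite Rabs_right by lra. nra.
  - rewrite Rabs_left by lra. nra.
Qed.

Theorem lemma5p8 (c1 c2 phi : R) (v : tvec) (x theta : R) (q : point) :
  - PI <= theta <= PI ->
  v = nb_shift c1 c2 phi x theta ->
  highest_point (geod_ray v) q ->
  Rabs x < 2 * exp (- height q) /\
  (0 < height q -> Rabs theta <= 2 * exp (- height q)).
Proof.
intros Ht -> [Hq _].
unfold geod_ray in Hq. cbn [nb_shift bp dir px py pz gamma_pt fst snd] in Hq.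
pose proof (cosh_ge1 x) as HC. pose proof (cosh_sq x) as HCs.
assert (Htanh : tanh x = sinh x / cosh x) by reflexivity.
pose proof (sin2_cos2 theta) as Hcs. pose proof (sin2_cos2 phi) as Hphi. unfold Rsqr in *.
assert (Hnh2 : (cos theta * (tanh x * cos phi) + sin theta * - sin phi) ^ 2 +
           (cos theta * (tanh x * sin phi) + sin theta * cos phi) ^ 2
   = cos theta ^ 2 * tanh x ^ 2 + sin theta ^ 2).
{ transitivity ((cos theta * tanh x)^2 * (sin phi * sin phi + cos phi * cos phi)
     + sin theta ^ 2 * (sin phi * sin phi + cos phi * cos phi)); [ring | rewrite Hphi; ring]. }
rewrite Hnh2 in Hq. clear Hnh2.
assert (Hnh0 : 0 <= cos theta ^ 2 * tanh x ^ 2 + sin theta ^ 2) by nra.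
pose proof (pow2_sqrt _ Hnh0) as Hnhsq.
pose proof (sqrt_pos (cos theta ^ 2 * tanh x ^ 2 + sin theta ^ 2)) as Hnhpos.
set (nh := sqrt (cos theta ^ 2 * tanh x ^ 2 + sin theta ^ 2)) in *.
set (C := cosh x) in *. set (sh := sinh x) in *. set (c := cos theta) in *.
set (s := sin theta) in *.
assert (HCpos : 0 < C) by lra.
assert (Hz : / C <= 1) by (rewrite <- Rinv_1; apply Rinv_le_contravar; lra).
assert (Hzpos : 0 < / C) by (apply Rinv_0_lt_compat; lra).
assert (HzC : / C * C = 1) by (field; lra).
destruct (Req_dec_T nh 0) as [E|E].
-
  assert (Hs0 : s = 0) by nra.
  assert (Hct : c * (sh / C) = 0) by nra.
  assert (Hc2 : c * c = 1) by nra.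
  assert (Hsh : sh = 0).
  { assert (sh / C = 0) by nra. replace sh with ((sh / C) * C) by (field; lra). nra. }
  assert (Hx : x = 0).
  { destruct (Req_dec_T x 0); auto. pose proof (sinh_big x n). fold sh in H.
    rewrite Hsh, Rabs_R0 in H. pose proof (Rabs_pos x). lra. }
  destruct Hq as [_ [_ [[Hu Hp]|[Hu Hp]]]].
  + apply finish.
    * lra.
    * rewrite Hx, Rabs_R0. lra.
    * intros _. assert (0 < c) by nra.
      pose proof (theta_bound theta Ht ltac:(fold c; lra)). fold s in H0.
      rewrite Hs0, Rabs_R0 in H0. pose proof (Rabs_pos theta).
      replace (Rabs theta) with 0 by lra. lra.
  + apply finish.
    * lra.
    * rewrite Hx, Rabs_R0. lra.
    * intros; lra.
- assert (Hnh : 0 < nh) by lra.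
  destruct Hq as [w [Hw ->]]. cbn [pz snd].
  set (z := / C) in *.
  set (wp := - (z * (c * z)) / nh) in *.
  pose proof (pow2_sqrt (wp ^ 2 + z ^ 2) ltac:(nra)) as HRr2.
  pose proof (sqrt_pos (wp ^ 2 + z ^ 2)) as HRr0.
  set (Rr := sqrt (wp ^ 2 + z ^ 2)) in *.
  assert (HRr : 0 < Rr) by nra.
  assert (Hwl : - Rr < w) by nra.
  assert (Hpp : 0 < Rr ^ 2 - w ^ 2) by nra.
  pose proof (pow2_sqrt _ (Rlt_le _ _ Hpp)) as Hp2.
  pose proof (sqrt_lt_R0 _ Hpp) as Hp0.
  set (p := sqrt (Rr ^ 2 - w ^ 2)) in *.
  set (K := C * nh).
  assert (HK : 0 < K) by (unfold K; nra).
  assert (Hid : Rr ^ 2 * K ^ 2 = 1).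
  { rewrite HRr2. unfold K, wp, z. rewrite Htanh in Hnhsq.
    replace (((- (/ C * (c * / C)) / nh) ^ 2 + (/ C) ^ 2) * (C * nh) ^ 2)
      with (c^2 / C^2 + nh^2) by (field; split; lra).
    rewrite Hnhsq.
    replace (c ^ 2 / C ^ 2 + (c ^ 2 * (sh / C) ^ 2 + s ^ 2)) with
      (c^2 * (1 + sh^2) / C^2 + s^2) by (field; lra).
    rewrite <- HCs. field_simplify; [|lra]. nra. }
  assert (HpK : p * K <= 1) by nra.
  assert (HK2 : K ^ 2 = c^2 * sh^2 + C^2 * s^2).
  { unfold K. replace ((C*nh)^2) with (C^2 * nh^2) by ring. rewrite Hnhsq, Htanh.
    field. lra. }
  apply finish; cbn [pz snd]; fold p.
  + exact Hp0.
  + destruct (Req_dec_T x 0) as [Ex|Ex].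
    * rewrite Ex, Rabs_R0. lra.
    * pose proof (sinh_big x Ex). fold sh in H.
      assert (Rabs sh <= K) by (apply abs_le_sq; auto; nra).
      assert (Rabs x * p < 2 * Rabs sh * p) by (apply Rmult_lt_compat_r; lra).
      assert (Rabs sh * p <= K * p) by (apply Rmult_le_compat_r; lra).
      lra.
  + intros Hp1. destruct (Rlt_le_dec c 0) as [Hc|Hc].
    * exfalso. assert (0 < wp).
      { unfold wp. unfold Rdiv. apply Rmult_lt_0_compat; [|apply Rinv_0_lt_compat; auto].
        replace (- (z * (c * z))) with ((z*z) * (-c)) by ring.
        apply Rmult_lt_0_compat; [apply Rmult_lt_0_compat|]; lra. }
      assert (wp * wp <= w * w) by (apply Rmult_le_compat; lra).
      assert (p^2 <= z^2) by lra.
      assert (z^2 <= 1) by (clear - Hz Hzpos; nra).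
      assert (1 < p^2) by (clear - Hp1; nra).
      lra.
    * pose proof (theta_bound theta Ht Hc) as Htb. fold s in Htb.
      assert (Rabs s <= K) by (apply abs_le_sq; auto; nra).
      assert (Rabs theta * p <= 2 * Rabs s * p) by (apply Rmult_le_compat_r; lra).
      assert (Rabs s * p <= K * p) by (apply Rmult_le_compat_r; lra).
      lra.
Qed.
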